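(* Let $G$, $p$ and $\ell$ be as in the construction described in the context. Every acyclic matching of $G$ of size at least $\ell$ saturates $p$; consequently, every such matching contains an edge $pp_q$ for some $q\in[t]$.
   Context: Construction. Let $n=3c$ with $c\in\mathbb{N}$, $X=[n]$, and let $(X,\mathcal{S}_1),\dots,(X,\mathcal{S}_t)$ be instances of \textsc{Exact-3-Cover} (each $\mathcal{S}_i$ a collection of 3-element subsets of $X$, all $\mathcal{S}_i$ of the same size $m$ and pairwise distinct as collections). Let $\mathcal{C}=\bigcup_{i\in[t]}\mathcal{S}_i=\{s_1,\dots,s_{|\mathcal{C}|}\}$ (distinct 3-sets). The graph $G$: a vertex set $X'=\{v_a:a\in X\}$; for each $s_j=\{a,b,c\}\in\mathcal{C}$ a set gadget $Q_j$ with vertices $u_{ja},u_{jb},u_{jc}$ (interface vertices), $u_j,w_j,u_j',w_j'$, where each of $u_j,w_j$ is adjacent to each of $u_{ja},u_{jb},u_{jc}$, and additionally $u_jw_j,u_ju_j',w_jw_j'$ are edges; for each $s_j\in\mathcal{C}$ and $d\in s_j$ the edge $u_{jd}v_d$ (cross edges); a vertex $p$ and vertices $P=\{p_1,\dots,p_t\}$ with edges $pp_i$ for all $i$; and for each $i\in[t]$ and each $s_j\in\mathcal{C}\setminus\mathcal{S}_i$, edges from $p_i$ to the three interface vertices of $Q_j$. There are no other edges. Set $\ell=2|\mathcal{C}|+\frac{2n}{3}+1$. A matching $M$ saturates a vertex $v$ if $v$ is an endpoint of an edge of $M$; $M$ is acyclic if the subgraph induced by the endpoints of its edges is a forest. 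*)

(* Defs.v *)
From mathcomp Require Import all_boot.
Set Implicit Arguments. Unset Strict Implicit. Unset Printing Implicit Defensive.

Section Graph.
Variables (T : finType) (e : rel T).

Definition is_matching (M : {set {set T}}) : Prop :=
  (forall E, E \in M -> exists x y, [/\ x != y, e x y & E = [set x; y]])
  /\ trivIset M.

Definition saturates (M : {set {set T}}) (v : T) : bool := v \in cover M.

Definition induced_forest (A : {set T}) : Prop :=
  ~ exists s : seq T, [/\ uniq s, 2 < size s, {subset s <= A} & cycle e s].

Definition acyclic_matching (M : {set {set T}}) : Prop :=
  is_matching M /\ induced_forest (cover M).
End Graph.

(* raw vertices:
   inl (inl a)           = v_a                 (a in X = 'I_n)
   inl (inr (s, a))      = u_{s a}  interface  (s in C, a in s)
   inr (inl (s, k))      = k=0: u_s, 1: w_s, 2: u'_s, 3: w'_s   (s in C)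
   inr (inr (inl tt))    = p
   inr (inr (inr i))     = p_i                 (i in [t])                 *)
Definition Vraw (n t : nat) : finType :=
  (('I_n + ({set 'I_n} * 'I_n)) + (({set 'I_n} * 'I_4) + (unit + 'I_t)))%type.

Section Construction.
Variables (n t : nat) (S : 'I_t -> {set {set 'I_n}}).

Definition Cset : {set {set 'I_n}} := \bigcup_(i < t) S i.

Definition valid (x : Vraw n t) : bool :=
  match x with
  | inl (inl _) => true
  | inl (inr (s, a)) => (s \in Cset) && (a \in s)
  | inr (inl (s, _)) => s \in Cset
  | inr (inr _) => true
  end.

(* one orientation of each edge *)
Definition arc (x y : Vraw n t) : bool :=
  match x, y with
  (* u_{ja} u_j and u_{ja} w_j *)
  | inl (inr (s, _)), inr (inl (s', k)) => (s == s') && (nat_of_ord k <= 1)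
  (* u_j w_j, u_j u'_j, w_j w'_j *)
  | inr (inl (s, k)), inr (inl (s', k')) =>
      (s == s') &&
      [|| (nat_of_ord k == 0) && (nat_of_ord k' == 1),
          (nat_of_ord k == 0) && (nat_of_ord k' == 2)
        | (nat_of_ord k == 1) && (nat_of_ord k' == 3)]
  (* cross edges u_{jd} v_d *)
  | inl (inr (_, a)), inl (inl b) => a == b
  | inr (inr (inl _)), inr (inr (inr _)) => true
  (* p_i to interface vertices of Q_j for s_j in C \ S_i *)
  | inr (inr (inr i)), inl (inr (s, _)) => s \notin S i
  | _, _ => false
  end.

Definition V : finType := {x : Vraw n t | valid x}.

Definition adj : rel V := fun x y => arc (val x) (val y) || arc (val y) (val x).

Definition vp : V := exist _ (inr (inr (inl tt)) : Vraw n t) isT.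
Definition vP (i : 'I_t) : V := exist _ (inr (inr (inr i)) : Vraw n t) isT.
End Construction.
Arguments adj {n t} S.
Arguments vp {n t} S.
Arguments vP {n t} S i.
Arguments V {n t} S.
Arguments Cset {n t} S.

(* Main.v *)
Require Import Defs.
From mathcomp Require Import all_boot zify.
Set Implicit Arguments. Unset Strict Implicit. Unset Printing Implicit Defensive.

Section Proof.
Variables (c t : nat) (S : 'I_t -> {set {set 'I_(3 * c)}}).
Local Notation VV := (V S).
Local Notation Vr := (Vraw (3 * c) t).
Local Notation C := (Cset S).
Local Notation adjS := (adj S).

Lemma adj_sym x y : adjS x y = adjS y x.
Proof. by rewrite /adj orbC. Qed.

Definition isX (x : VV) : bool := if val x is inl (inl _) then true else false.
Definition isP (x : VV) : bool := if val x is inr (inr (inr _)) then true else false.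
Definition isG (x : VV) : bool :=
  match val x with inl (inr _) | inr (inl _) => true | _ => false end.
Definition gof (x : VV) : {set 'I_(3*c)} :=
  match val x with inl (inr (s,_)) => s | inr (inl (s,_)) => s | _ => set0 end.

Variable M : {set {set VV}}.
Hypothesis HM : acyclic_matching adjS M.

Lemma edge_form E : E \in M -> exists x y, [/\ x != y, adjS x y & E = [set x; y]].
Proof. by case: HM => [[H _] _]; apply: H. Qed.

Lemma trivM : trivIset M.
Proof. by case: HM => [[_ H] _]. Qed.

Lemma no_cycle (s : seq VV) : uniq s -> 2 < size s -> {subset s <= cover M} -> cycle adjS s -> False.
Proof. by case: HM => _ H Hu Hs Hsub Hc; apply: H; exists s. Qed.

Lemma edge_neq x y : [set x; y] \in M -> (x != y) && adjS x y.
Proof.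
move=> /edge_form [a [b [Hab Hadj E]]].
have Hx : x \in [set a; b] by rewrite -E !inE eqxx.
have Hy : y \in [set a; b] by rewrite -E !inE eqxx orbT.
have Hne : x != y.
  apply/eqP=> Exy; move: (cards2 a b); rewrite -E Exy setUid cards1 Hab //.
rewrite Hne /=; move: Hx Hy Hne; rewrite !inE => /orP [] /eqP -> /orP [] /eqP ->;
  rewrite ?eqxx //; by rewrite adj_sym.
Qed.

Definition partner (x : VV) : VV := odflt x [pick y | [set x; y] \in M].

Lemma partnerE x y : [set x; y] \in M -> partner x = y.
Proof.
move=> Hxy; rewrite /partner; case: pickP => [y' Hy' | H]; last by rewrite H in Hxy.
rewrite /=.
have Eq : [set x; y'] = [set x; y].
  apply/eqP; apply: contraT => Hne.
  have := trivIsetP trivM _ _ Hy' Hxy Hne.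
  by move/disjointFr => /(_ x); rewrite !inE eqxx => /(_ isT).
have : y \in [set x; y'] by rewrite Eq !inE eqxx orbT.
rewrite !inE => /orP [/eqP Eyx|/eqP -> //].
by move: (edge_neq Hxy); rewrite Eyx eqxx.
Qed.

Lemma in_cover x : x \in cover M -> [set x; partner x] \in M.
Proof.
move=> /bigcupP [E HE Hx].
have [a [b [_ _ Eab]]] := edge_form HE.
move: Hx; rewrite Eab !inE => /orP [] /eqP Ex; subst x.
  by rewrite (partnerE (y:=b)) -?Eab.
by rewrite (partnerE (y:=a)) setUC -?Eab.
Qed.

Lemma mem_coverE E x : E \in M -> x \in E -> x \in cover M.
Proof. by move=> HE Hx; apply/bigcupP; exists E. Qed.

Lemma partner_cov x : x \in cover M -> partner x \in cover M.
Proof. by move=> Hx; apply: (mem_coverE (in_cover Hx)); rewrite !inE eqxx orbT. Qed.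

Lemma partnerK x : x \in cover M -> partner (partner x) = x.
Proof. by move=> Hx; apply: partnerE; rewrite setUC in_cover. Qed.

Lemma adj_partner x : x \in cover M -> adjS x (partner x).
Proof. by move=> Hx; case/andP: (edge_neq (in_cover Hx)). Qed.

Lemma partner_neq x : x \in cover M -> partner x != x.
Proof. by move=> Hx; case/andP: (edge_neq (in_cover Hx)); rewrite eq_sym. Qed.

Lemma partner_inj x y : x \in cover M -> y \in cover M -> partner x = partner y -> x = y.
Proof. by move=> Hx Hy E; rewrite -(partnerK Hx) E partnerK. Qed.


Definition O0 : 'I_4 := @Ordinal 4 0 isT.
Definition O1 : 'I_4 := @Ordinal 4 1 isT.
Definition O2 : 'I_4 := @Ordinal 4 2 isT.
Definition O3 : 'I_4 := @Ordinal 4 3 isT.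

Lemma adj_vp y : adjS (vp S) y -> isP y.
Proof. by case: y => [[[d|[s a]]|[[s k]|[[]|i]]] Hv]. Qed.

Lemma adjP_G x y : isP x -> adjS x y -> y != vp S -> isG y.
Proof.
case: x => [[[d|[s a]]|[[s k]|[[]|i]]] Hv] //= _.
by case: y => [[[d'|[s' a']]|[[s' k']|[[]|i']]] Hv'] //=.
Qed.

Lemma adjK_P x y s k : val x = inr (inl (s, k)) -> isP y -> adjS x y = false.
Proof.
case: x => [r Hv] /= Er; subst r.
by case: y => [[[d'|[s' a']]|[[s' k']|[[]|i']]] Hv'].
Qed.

Lemma adjI_cases x y s a : val x = inl (inr (s, a)) -> adjS x y ->
  [|| isX y, isP y, val y == inr (inl (s, O0)) | val y == inr (inl (s, O1))].
Proof.
case: x => [r Hv] /= Er; subst r.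
case: y => [[[d'|[s' a']]|[[s' k']|[[]|i']]] Hv'] //=; rewrite /adj /= orbF.
case/andP => /eqP <-; case: k' Hv' => [[|[|k']] Hk] Hv' //= _.
- by apply/orP; left; apply/eqP; congr (inr (inl (_, _))); apply: val_inj.
- by apply/orP; right; apply/eqP; congr (inr (inl (_, _))); apply: val_inj.
Qed.

Lemma adjK2 x y s : val x = inr (inl (s, O2)) -> adjS x y -> val y = inr (inl (s, O0)).
Proof.
case: x => [r Hv] /= Er; subst r.
case: y => [[[d'|[s' a']]|[[s' k']|[[]|i']]] Hv'] //=; rewrite /adj /=.
- by rewrite andbF.
- rewrite andbF /=; case: k' Hv' => [[|[|[|[|k']]]] Hk] Hv'; rewrite /= ?andbF ?orbF // => /andP [/eqP -> _];
  by congr (inr (inl (_, _))); apply: val_inj.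
Qed.

Lemma adjK3 x y s : val x = inr (inl (s, O3)) -> adjS x y -> val y = inr (inl (s, O1)).
Proof.
case: x => [r Hv] /= Er; subst r.
case: y => [[[d'|[s' a']]|[[s' k']|[[]|i']]] Hv'] //=; rewrite /adj /=.
- by rewrite andbF.
- rewrite andbF /=; case: k' Hv' => [[|[|[|[|k']]]] Hk] Hv'; rewrite /= ?andbF ?orbF // => /andP [/eqP -> _];
  by congr (inr (inl (_, _))); apply: val_inj.
Qed.

Lemma adjPI x y z s a b : isP x -> val y = inl (inr (s, a)) -> val z = inl (inr (s, b)) ->
  adjS x y -> adjS x z.
Proof.
case: x => [[[d|[s' a']]|[[s' k]|[[]|i]]] Hv] //= _.
by case: y => [r Hr] /= Er; subst r; case: z => [r' Hr'] /= Er'; subst r'; rewrite /adj /= !orbF.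
Qed.

Lemma adjUI x y s a : val x = inr (inl (s, O0)) -> val y = inl (inr (s, a)) -> adjS x y.
Proof. by case: x => [r Hr] /= Er; subst r; case: y => [r' Hr'] /= Er'; subst r'; rewrite /adj /= eqxx. Qed.

Lemma adjWI x y s a : val x = inr (inl (s, O1)) -> val y = inl (inr (s, a)) -> adjS x y.
Proof. by case: x => [r Hr] /= Er; subst r; case: y => [r' Hr'] /= Er'; subst r'; rewrite /adj /= eqxx. Qed.

Lemma adjUW x y s : val x = inr (inl (s, O0)) -> val y = inr (inl (s, O1)) -> adjS x y.
Proof. by case: x => [r Hr] /= Er; subst r; case: y => [r' Hr'] /= Er'; subst r'; rewrite /adj /= eqxx. Qed.


Lemma tri x y z : x \in cover M -> y \in cover M -> z \in cover M ->
  x != y -> y != z -> x != z -> adjS x y -> adjS y z -> adjS z x -> False.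
Proof.
move=> Cx Cy Cz nxy nyz nxz axy ayz azx.
apply: (@no_cycle [:: x; y; z]) => //=.
- by rewrite !inE negb_or nxy nxz nyz.
- by move=> v; rewrite !inE => /or3P [] /eqP ->.
- by rewrite axy ayz azx.
Qed.

Lemma quad a b x d : a \in cover M -> b \in cover M -> x \in cover M -> d \in cover M ->
  a != b -> a != x -> a != d -> b != x -> b != d -> x != d ->
  adjS a b -> adjS b x -> adjS x d -> adjS d a -> False.
Proof.
move=> Ca Cb Cx Cd nab nax nad nbx nbd nxd aab abx axd ada.
apply: (@no_cycle [:: a; b; x; d]) => //=.
- by rewrite !inE !negb_or nab nax nad nbx nbd nxd.
- by move=> v; rewrite !inE => /or4P [] /eqP ->.
- by rewrite aab abx axd ada.
Qed.

Lemma neq_val (x y : VV) r1 r2 : val x = r1 -> val y = r2 -> r1 != r2 -> x != y.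
Proof. by move=> <- <-; rewrite (inj_eq val_inj). Qed.

Lemma neq_isP (x y : VV) : isP x -> ~~ isP y -> x != y.
Proof. by move=> Hx Hy; apply/eqP=> E; move: Hy; rewrite -E Hx. Qed.

Definition cov x := x \in cover M.
Definition pm x := cov x && isP (partner x).
Definition xm x := cov x && isX (partner x).
Definition mt x y := cov x && (partner x == y).

Section Gadget.
Variables (s : {set 'I_(3 * c)}) (U W U2 W2 : VV).
Hypotheses (EU : val U = inr (inl (s, O0))) (EW : val W = inr (inl (s, O1)))
  (EU2 : val U2 = inr (inl (s, O2))) (EW2 : val W2 = inr (inl (s, O3))).

Lemma gad_facts : (cov U2 <= cov U) /\ (cov W2 <= cov W).
Proof.
split.
- case H: (cov U2) => //; suff -> : cov U by [].
  have := adjK2 EU2 (adj_partner H); rewrite -EU => /val_inj <-; exact: partner_cov.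
- case H: (cov W2) => //; suff -> : cov W by [].
  have := adjK3 EW2 (adj_partner H); rewrite -EW => /val_inj <-; exact: partner_cov.
Qed.

Lemma int_facts : [/\ pm U = false, pm W = false, pm U2 = false & pm W2 = false].
Proof.
have H k (K : VV) : val K = inr (inl (s, k)) -> pm K = false.
  move=> EK; rewrite /pm; apply/negP => /andP [Hc Hp].
  by have := adj_partner Hc; rewrite (adjK_P EK Hp).
by split; [exact: H EU | exact: H EW | exact: H EU2 | exact: H EW2].
Qed.

Variables (I : VV) (a : 'I_(3 * c)).
Hypothesis EI : val I = inl (inr (s, a)).

Lemma isP_I : ~~ isP I. Proof. by rewrite /isP EI. Qed.

Lemma single_facts :
  [/\ cov U + cov W + cov I <= 2, cov I <= xm I + pm I + mt I U + mt I W,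
      mt I U + cov U2 <= 1, mt I W + cov W2 <= 1 &
      [/\ mt I U <= cov U, mt I W <= cov W, pm I <= cov I & xm I <= cov I]].
Proof.
rewrite /pm /xm /mt; split.
- case CU: (cov U); case CW: (cov W); case CI: (cov I) => //.
  exfalso; apply: (tri CU CW CI).
  + by apply: (neq_val EU EW); apply/eqP => -[].
  + by apply: (neq_val EW EI).
  + by apply: (neq_val EU EI).
  + exact: adjUW EU EW.
  + exact: adjWI EW EI.
  + by rewrite adj_sym; exact: adjUI EU EI.
- case CI: (cov I) => //=.
  move: (adjI_cases EI (adj_partner CI)).
  rewrite -EU -EW !val_eqE.
  by case/or4P => ->; rewrite ?addn1 ?addnS.
- case CI: (cov I) => /=; last by case: (cov U2).
  case E: (partner I == U) => /=; last by case: (cov U2).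
  case C2: (cov U2) => //; exfalso.
  have := adjK2 EU2 (adj_partner C2); rewrite -EU => /val_inj E2.
  move/eqP: E; rewrite -E2 => /(partner_inj CI C2) EE.
  by move: EI; rewrite EE EU2.
- case CI: (cov I) => /=; last by case: (cov W2).
  case E: (partner I == W) => /=; last by case: (cov W2).
  case C2: (cov W2) => //; exfalso.
  have := adjK3 EW2 (adj_partner C2); rewrite -EW => /val_inj E2.
  move/eqP: E; rewrite -E2 => /(partner_inj CI C2) EE.
  by move: EI; rewrite EE EW2.
- split.
  + case CI: (cov I) => //=; case E: (partner I == U) => //=.
    by move/eqP: E => <-; rewrite /cov partner_cov.
  + case CI: (cov I) => //=; case E: (partner I == W) => //=.
    by move/eqP: E => <-; rewrite /cov partner_cov.
  + by move: (cov I) (isP (partner I)) => [] [].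
  + by move: (cov I) (isX (partner I)) => [] [].
Qed.

Variables (J : VV) (b : 'I_(3 * c)).
Hypotheses (EJ : val J = inl (inr (s, b))) (Hab : a != b).

Lemma quadI z : pm I -> cov J -> cov z -> partner I != z -> z != I -> z != J ->
  adjS J z -> adjS z I -> False.
Proof.
rewrite /pm /cov => /andP [CI PI] CJ Cz Pz nzI nzJ aJz azI.
have nIJ : I != J by apply: (neq_val EI EJ); apply/eqP => -[] /eqP; rewrite (negbTE Hab).
apply: (quad CI (partner_cov CI) CJ Cz) => //.
- by rewrite eq_sym; apply: neq_isP PI isP_I.
- by rewrite eq_sym.
- by apply: neq_isP PI _; rewrite /isP EJ.
- by rewrite eq_sym.
- exact: adj_partner.
- by apply: (adjPI PI EI EJ); rewrite adj_sym; apply: adj_partner.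
Qed.

Lemma pair_facts :
  [/\ pm I + cov J + cov U <= 2, pm I + cov J + cov W <= 2, pm I + pm J <= 1,
      mt I U + mt J U <= 1 & mt I W + mt J W <= 1].
Proof.
have nIJ : I != J by apply: (neq_val EI EJ); apply/eqP => -[] /eqP; rewrite (negbTE Hab).
split.
- case P: (pm I); case CJ: (cov J); case CU: (cov U) => //; exfalso.
  apply: (quadI P CJ CU) => //.
  + by move: P => /andP [_ Pp]; apply: neq_isP Pp _; rewrite /isP EU.
  + by apply: (neq_val EU EI).
  + by apply: (neq_val EU EJ).
  + by rewrite adj_sym; apply: adjUI EU EJ.
  + by apply: adjUI EU EI.
- case P: (pm I); case CJ: (cov J); case CU: (cov W) => //; exfalso.
  apply: (quadI P CJ CU) => //.
  + by move: P => /andP [_ Pp]; apply: neq_isP Pp _; rewrite /isP EW.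
  + by apply: (neq_val EW EI).
  + by apply: (neq_val EW EJ).
  + by rewrite adj_sym; apply: adjWI EW EJ.
  + by apply: adjWI EW EI.
- case P: (pm I); case PJ: (pm J) => //; exfalso.
  move: (PJ); rewrite /pm => /andP [CJ PpJ].
  move: (P); rewrite /pm => /andP [CI PpI].
  apply: (quadI (z := partner J) P CJ (partner_cov CJ)) => //.
  + by apply/eqP => /(partner_inj CI CJ) E; rewrite E eqxx in nIJ.
  + by apply: neq_isP PpJ isP_I.
  + by apply: neq_isP PpJ _; rewrite /isP EJ.
  + exact: adj_partner.
  + by apply: (adjPI PpJ EJ EI); rewrite adj_sym; apply: adj_partner.
- rewrite /mt; case CI: (cov I); case CJ: (cov J);
    case E1: (partner I == U); case E2: (partner J == U) => //=; exfalso.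
  move/eqP: E2; move/eqP: E1 => <- /esym /(partner_inj CI CJ) E.
  by rewrite E eqxx in nIJ.
- rewrite /mt; case CI: (cov I); case CJ: (cov J);
    case E1: (partner I == W); case E2: (partner J == W) => //=; exfalso.
  move/eqP: E2; move/eqP: E1 => <- /esym /(partner_inj CI CJ) E.
  by rewrite E eqxx in nIJ.
Qed.

End Gadget.

Definition mk (r : Vr) : VV := insubd (vp S) r.

Lemma mkK r : valid S r -> val (mk r) = r.
Proof. exact: insubdK. Qed.

Lemma eq_mk x r : valid S r -> (x == mk r) = (val x == r).
Proof. by move=> Hr; rewrite -val_eqE mkK. Qed.

Lemma gadget_bound s : s \in C -> #|s| = 3 ->
  \sum_(x | isG x && (gof x == s)) (3 * cov x + 3 * pm x) <=
  12 + \sum_(x | isG x && (gof x == s)) xm x.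
Proof.
move=> Hs Hc.
have Hen : size (enum s) = 3 by rewrite -cardE.
have Hu := enum_uniq (mem s).
case Ee: (enum s) Hen Hu => [|a [|b [|d [|? ?]]]] // _ Hu.
have Ha : a \in s by rewrite -mem_enum Ee !inE eqxx.
have Hb : b \in s by rewrite -mem_enum Ee !inE eqxx ?orbT.
have Hd : d \in s by rewrite -mem_enum Ee !inE eqxx ?orbT.
move: Hu; rewrite /= !inE negb_or => /and3P [/andP [nab nad] nbd _].
have vI e : e \in s -> valid S (inl (inr (s, e)) : Vr) by move=> He; rewrite /= Hs He.
have vK k : valid S (inr (inl (s, k)) : Vr) by rewrite /= Hs.
pose Ia := mk (inl (inr (s, a))); pose Ib := mk (inl (inr (s, b))); pose Id := mk (inl (inr (s, d))).
pose U := mk (inr (inl (s, O0))); pose W := mk (inr (inl (s, O1))).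
pose U2 := mk (inr (inl (s, O2))); pose W2 := mk (inr (inl (s, O3))).
have EIa : val Ia = inl (inr (s, a)) by rewrite mkK ?vI.
have EIb : val Ib = inl (inr (s, b)) by rewrite mkK ?vI.
have EId : val Id = inl (inr (s, d)) by rewrite mkK ?vI.
have EU : val U = inr (inl (s, O0)) by rewrite mkK.
have EW : val W = inr (inl (s, O1)) by rewrite mkK.
have EU2 : val U2 = inr (inl (s, O2)) by rewrite mkK.
have EW2 : val W2 = inr (inl (s, O3)) by rewrite mkK.
pose l := [:: Ia; Ib; Id; U; W; U2; W2].
have Hl : forall x, (isG x && (gof x == s)) = (x \in l).
  move=> x; apply/idP/idP.
  - case: x => [[[e|[s' e]]|[[s' k]|[[]|i]]] Hv] //=; rewrite /isG /gof /= => /eqP Es; subst s'.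
    + have : e \in enum s by rewrite mem_enum; case/andP: Hv.
      rewrite Ee !inE => He; rewrite -!val_eqE /= EIa EIb EId.
      by move/or3P: He => [] /eqP ->; rewrite eqxx ?orbT.
    + rewrite /l !inE -!val_eqE /= EU EW EU2 EW2.
      case: k Hv => [[|[|[|[|k]]]] Hk] Hv.
      * have -> : Ordinal Hk = O0 by apply: val_inj. by rewrite eqxx ?orbT.
      * have -> : Ordinal Hk = O1 by apply: val_inj. by rewrite eqxx ?orbT.
      * have -> : Ordinal Hk = O2 by apply: val_inj. by rewrite eqxx ?orbT.
      * have -> : Ordinal Hk = O3 by apply: val_inj. by rewrite eqxx ?orbT.
      * by [].
  - move=> Hx; have Hall : all (fun y => isG y && (gof y == s)) l.
      by rewrite /= /isG /gof EIa EIb EId EU EW EU2 EW2 eqxx.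
    exact: (allP Hall).
have Hul : uniq l.
  rewrite /l /= !inE !negb_or.
  repeat (apply/andP; split) => //;
  apply/eqP => /(congr1 val); rewrite ?EIa ?EIb ?EId ?EU ?EW ?EU2 ?EW2 => -[] //;
  by move/eqP; rewrite ?(negbTE nab) ?(negbTE nad) ?(negbTE nbd).
rewrite !(eq_bigl _ _ Hl) -!big_uniq // !big_cons !big_nil /=.
have [F1 F2] := gad_facts EU EW EU2 EW2.
have [P1 P2 P3 P4] := int_facts EU EW EU2 EW2.
rewrite P1 P2 P3 P4.
have [A1 A2 A3 A4 [A5 A6 A7 A8]] := single_facts EU EW EU2 EW2 EIa.
have [B1 B2 B3 B4 [B5 B6 B7 B8]] := single_facts EU EW EU2 EW2 EIb.
have [D1 D2 D3 D4 [D5 D6 D7 D8]] := single_facts EU EW EU2 EW2 EId.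
have nba : b != a by rewrite eq_sym.
have nda : d != a by rewrite eq_sym.
have ndb : d != b by rewrite eq_sym.
have [Q1 Q2 Q3 Q4 Q5] := pair_facts EU EW EIa EIb nab.
have [R1 R2 R3 R4 R5] := pair_facts EU EW EIa EId nad.
have [T1 T2 T3 T4 T5] := pair_facts EU EW EIb EIa nba.
have [V1 V2 V3 V4 V5] := pair_facts EU EW EIb EId nbd.
have [X1 X2 X3 X4 X5] := pair_facts EU EW EId EIa nda.
have [Y1 Y2 Y3 Y4 Y5] := pair_facts EU EW EId EIb ndb.
have bb (x : bool) : x <= 1 by case: x.
move: F1 F2 A1 A2 A3 A4 A5 A6 A7 A8 B1 B2 B3 B4 B5 B6 B7 B8 D1 D2 D3 D4 D5 D6 D7 D8
  Q1 Q2 Q3 Q4 Q5 R1 R2 R3 R4 R5 T1 T2 T3 T4 T5 V1 V2 V3 V4 V5 X1 X2 X3 X4 X5 Y1 Y2 Y3 Y4 Y5.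
move: (bb (cov Ia)) (bb (cov Ib)) (bb (cov Id)) (bb (cov U)) (bb (cov W)) (bb (cov U2)) (bb (cov W2))
  (bb (pm Ia)) (bb (pm Ib)) (bb (pm Id)) (bb (xm Ia)) (bb (xm Ib)) (bb (xm Id))
  (bb (mt Ia U)) (bb (mt Ib U)) (bb (mt Id U)) (bb (mt Ia W)) (bb (mt Ib W)) (bb (mt Id W)).
clearbody Ia Ib Id U W U2 W2 l.
move: (nat_of_bool (cov Ia)) (nat_of_bool (cov Ib)) (nat_of_bool (cov Id)) (nat_of_bool (cov U))
  (nat_of_bool (cov W)) (nat_of_bool (cov U2)) (nat_of_bool (cov W2))
  (nat_of_bool (pm Ia)) (nat_of_bool (pm Ib)) (nat_of_bool (pm Id))
  (nat_of_bool (xm Ia)) (nat_of_bool (xm Ib)) (nat_of_bool (xm Id))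
  (nat_of_bool (mt Ia U)) (nat_of_bool (mt Ib U)) (nat_of_bool (mt Id U))
  (nat_of_bool (mt Ia W)) (nat_of_bool (mt Ib W)) (nat_of_bool (mt Id W)).
clear. move=> *. lia.
Qed.

Lemma card_setP (P : pred VV) : #|[set x | P x]| = \sum_x P x.
Proof. by rewrite -sum1dep_card big_mkcond /=; apply: eq_bigr => x _; case: (P x). Qed.

Lemma isP_vP (y : VV) : isP y -> exists q, y = vP S q.
Proof.
case: y => [[[d|[s a]]|[[s k]|[[]|i]]] Hv] //= _.
by exists i; apply: val_inj.
Qed.

Section Count.
Hypothesis HS3 : forall i s, s \in S i -> #|s| = 3.
Hypothesis Hnp : vp S \notin cover M.

Lemma cardC s : s \in C -> #|s| = 3.
Proof. by move=> /bigcupP [i _ Hi]; apply: HS3 Hi. Qed.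

Lemma main_count : 6 * #|M| <= 12 * #|C| + 12 * c.
Proof.
have Hcov : #|cover M| = 2 * #|M|.
  move/eqP: trivM => <-.
  rewrite (mulnC 2 #|M|) -sum_nat_const; apply: eq_bigr => E HE.
  by have [x [y [nxy _ ->]]] := edge_form HE; rewrite cards2 nxy.
pose Gc := [set x | isG x && cov x].
pose Pc := [set x | isP x && cov x].
pose Xc := [set x | isX x && cov x].
pose Pm := [set x | isG x && pm x].
pose Xm := [set x | isG x && xm x].
have H1 : #|cover M| <= #|Gc| + #|Pc| + #|Xc|.
  have Hsub : cover M \subset Gc :|: Pc :|: Xc.
    apply/subsetP => x Hx; rewrite !inE /cov Hx !andbT.
    move: Hx Hnp; case: x => [[[d|[s a]]|[[s k]|[[]|i]]] Hv] //= Hx.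
    move=> Hn; have E : vp S = exist _ (inr (inr (inl tt))) Hv by apply: val_inj.
    by rewrite E Hx in Hn.
  apply: (leq_trans (subset_leq_card Hsub)).
  rewrite cardsU (leq_trans (leq_subr _ _)) // leq_add2r cardsU leq_subr //.
have H2 : #|Pc| <= #|Pm|.
  suff Hsub : Pc \subset partner @: Pm.
    exact: leq_trans (subset_leq_card Hsub) (leq_imset_card _ _).
  apply/subsetP => x; rewrite inE => /andP [Px Cx].
  have Cy := partner_cov Cx.
  have Gy : isG (partner x).
    apply: (adjP_G Px (adj_partner Cx)).
    by apply: contraNneq Hnp => <-.
  apply/imsetP; exists (partner x); last by rewrite partnerK.
  by rewrite inE Gy /pm /cov Cy partnerK // Px.
have H3 : #|Xm| <= #|Xc|.
  have Hinj : {in Xm &, injective partner}.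
    move=> x y; rewrite !inE /xm /cov => /and3P [_ Cx _] /and3P [_ Cy _].
    exact: partner_inj.
  rewrite -(card_in_imset Hinj); apply: subset_leq_card.
  apply/subsetP => y /imsetP [x]; rewrite inE /xm /cov => /and3P [_ Cx Xx] ->.
  by rewrite inE Xx /cov partner_cov.
have H4 : #|Xc| <= 3 * c.
  have Hsub : Xc \subset [set mk (inl (inl d)) | d in 'I_(3 * c)].
    apply/subsetP => x; rewrite inE; case: x => [[[d|[s a]]|[[s k]|[[]|i]]] Hv] //= _.
    by apply/imsetP; exists d => //; apply: val_inj; rewrite /= mkK.
  by apply: (leq_trans (subset_leq_card Hsub)); rewrite (leq_trans (leq_imset_card _ _)) // card_ord.
have H5 : 3 * #|Gc| + 3 * #|Pm| <= 12 * #|C| + #|Xm|.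
  rewrite !card_setP !big_distrr -big_split /=.
  have EL : \sum_x (3 * (isG x && cov x) + 3 * (isG x && pm x)) =
            \sum_(x | isG x) (3 * cov x + 3 * pm x).
    by rewrite [RHS]big_mkcond; apply: eq_bigr => x _; case: (isG x).
  have ER : \sum_x (isG x && xm x) = \sum_(x | isG x) (xm x : nat).
    by rewrite [RHS]big_mkcond; apply: eq_bigr => x _; case: (isG x).
  rewrite EL ER.
  have HQ : forall x, isG x -> gof x \in C.
    by case=> [[[d|[s a]]|[[s k]|[[]|i]]] Hv] //= _; rewrite /gof /=; case/andP: Hv.
  rewrite (partition_big gof (mem C) HQ) (partition_big gof (mem C) HQ) /=.
  rewrite (mulnC 12 #|C|) -sum_nat_const -big_split /=; apply: leq_sum => s Hs.
  exact: gadget_bound Hs (cardC Hs).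
lia.
Qed.
End Count.

End Proof.

Theorem lemma15 (c t m : nat) (S : 'I_t -> {set {set 'I_(3 * c)}})
  (HS3 : forall i s, s \in S i -> #|s| = 3)
  (Hm : forall i, #|S i| = m)
  (Hdist : injective S)
  (M : {set {set V S}}) :
  acyclic_matching (adj S) M ->
  2 * #|Cset S| + 2 * c + 1 <= #|M| ->
  saturates M (vp S) /\ exists q : 'I_t, [set vp S; vP S q] \in M.
Proof.
move=> HM Hsz.
have Hsat : vp S \in cover M.
  apply: contraT => Hn; have := main_count HM HS3 Hn; lia.
split; first exact: Hsat.
have [q Eq] := isP_vP (adj_vp (adj_partner HM Hsat)).
by exists q; rewrite -Eq; apply: in_cover.
Qed.
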